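(* Let $\Lambda\Subset\mathbb X$ and suppose $\rho:\mathbf F\to\mathbb C$ satisfies \[ \rho(\{s\}\cup T)=\sum_{N\subset\Lambda\setminus T}z(s)\,\gamma(s,N\mid T)\,\rho(T\cup N) \] for all $s\in\mathbb X$ and $T\Subset\mathbb X\setminus\{s\}$. Then there exists $c\in\mathbb C$ such that $\rho(X)=Z(X,\Lambda)\,c$ for all $X\Subset\mathbb X$. In particular, if $\rho(\varnothing)\neq0$, then $Z(\Lambda)\neq0$ and $R(X,\Lambda)=\rho(X)/\rho(\varnothing)$ for all $X\Subset\mathbb X$.
   Context: $\mathbb X$ is a finite or countably infinite set, $X\Subset\mathbb X$ means finite subset, $\mathbf F$ is the set of finite subsets. Fix $z:\mathbb X\to\mathbb C$, $W:\mathbf F\to\mathbb C$; $z^X=\prod_{y\in X}z(y)$. Conditional interaction: $W(X\mid B)=\prod_{C\subset B}W(X\cup C)$ if $X\cap B=\varnothing$, $W(X\mid B)=0$ if $X=\{y\}$ with $y\in B$, $W(X\mid B)=1$ otherwise. Boltzmann factor $\kappa(X\mid B)=\prod_{\varnothing\neq S\subset X}W(S\mid B)$, $\kappa(X)=\kappa(X\mid\varnothing)$, and $\kappa(s\mid B)=\kappa(\{s\}\mid B)$. Kernel: $\gamma(s,N\mid B)=\sum_{M\subset N}(-1)^{|N\setminus M|}\kappa(s\mid B\cup M)$ for $s\in\mathbb X$, $N,B\in\mathbf F$. Partition functions $Z(X,\Lambda)=\sum_{Y\subset\Lambda\setminus X}z^{X\cup Y}\kappa(X\cup Y)$, $Z(\Lambda)=Z(\varnothing,\Lambda)$;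 correlations $R(X,\Lambda)=Z(X,\Lambda)/Z(\Lambda)$ when $Z(\Lambda)\neq0$ (defined for all $X\Subset\mathbb X$, not only $X\subset\Lambda$). *)

(* Defs.v *)
From HB Require Import structures.
From mathcomp Require Import all_boot all_order all_algebra.
From mathcomp Require Import finmap.
From mathcomp Require Import reals.
From mathcomp Require Import complex.
Set Implicit Arguments. Unset Strict Implicit. Unset Printing Implicit Defensive.
Import Order.TTheory GRing.Theory Num.Theory.
Local Open Scope ring_scope.
Local Open Scope fset_scope.

Section Defs.
Variables (R : realType) (X : countType).
Notation C := (complex R).
Variables (z : X -> C) (W : {fset X} -> C).

Definition zpow (A : {fset X}) : C := \prod_(y <- A) z y.

Definition Wcond (A B : {fset X}) : C :=
  if A `&` B == fset0 then \prod_(D <- fpowerset B) W (A `|` D)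
  else if [exists y : A, (A == [fset val y]) && (val y \in B)] then 0
  else 1.

Definition kappa (A B : {fset X}) : C :=
  \prod_(S <- fpowerset A | S != fset0) Wcond S B.

Definition kappa1 (s : X) (B : {fset X}) : C := kappa [fset s] B.

Definition gamma (s : X) (N B : {fset X}) : C :=
  \sum_(M <- fpowerset N) (-1) ^+ #|` N `\` M| * kappa1 s (B `|` M).

Definition Zpart (A L : {fset X}) : C :=
  \sum_(Y <- fpowerset (L `\` A)) zpow (A `|` Y) * kappa (A `|` Y) fset0.

Definition Z0 (L : {fset X}) : C := Zpart fset0 L.

Definition corr (A L : {fset X}) : C := Zpart A L / Z0 L.
End Defs.

(* Main.v *)
Require Import Defs.
From HB Require Import structures.
From mathcomp Require Import all_boot all_order all_algebra.
From mathcomp Require Import finmap reals complex.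
Import GRing.Theory Num.Theory.
Local Open Scope ring_scope.
Local Open Scope fset_scope.

Section Aux.
Variable (K : choiceType).

Lemma big_fpowU1 (T : Type) (idx : T) (op : Monoid.com_law idx)
  (a : K) (A : {fset K}) (F : {fset K} -> T) : a \notin A ->
  \big[op/idx]_(S <- fpowerset (a |` A)) F S =
  op (\big[op/idx]_(S <- fpowerset A) F S)
     (\big[op/idx]_(S <- fpowerset A) F (a |` S)).
Proof.
move=> aA.
rewrite (big_fsetID _ [pred S : {fset K} | a \notin S]); congr (op _ _).
  apply: eq_fbigl => S; rewrite !inE /= !fpowersetE.
  apply/andP/idP => [[sub aS]|sub].
    apply/fsubsetP => x xS; have := fsubsetP sub x xS.
    by rewrite !inE; case/orP => // /eqP xa; rewrite -xa xS in aS.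
  split; first exact: fsubset_trans sub (fsubsetU1 _ _).
  by apply: contra aA; apply: (fsubsetP sub).
have -> : [fset x in fpowerset (a |` A) | ~~ [pred S : {fset K} | a \notin S] x]
   = [fset a |` S | S in fpowerset A].
  apply/fsetP => S; rewrite !inE /=; apply/andP/imfsetP => [[]|[S' S'A ->]].
    rewrite fpowersetE negbK => sub aS; exists (S `\ a); last by rewrite fsetD1K.
    rewrite /= fpowersetE; apply/fsubsetP => x; rewrite !inE => /andP[xa xS].
    by have := fsubsetP sub x xS; rewrite !inE (negbTE xa).
  rewrite /= fpowersetE in S'A.
  by rewrite fpowersetE negbK fsetU11 fsetUS.
rewrite big_imfset /=; last first.
  move=> S1 S2; rewrite /= !fpowersetE => s1 s2 e.
  have aS1 : a \notin S1 by apply: contra aA; apply: (fsubsetP s1).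
  have aS2 : a \notin S2 by apply: contra aA; apply: (fsubsetP s2).
  by rewrite -(fsetU1K aS1) -(fsetU1K aS2) e.
apply: perm_big; apply: uniq_perm; rewrite ?enum_finmem_uniq ?fset_uniq //.
Qed.

Lemma fset_ind' (P : {fset K} -> Prop) :
  P fset0 -> (forall a A, a \notin A -> P A -> P (a |` A)) -> forall A, P A.
Proof.
move=> P0 PS A; have [n] := ubnP #|`A|; elim: n A => // n IH A.
case: (fset_0Vmem A) => [->//|[a aA]] Hn.
rewrite -(fsetD1K aA); apply: PS; first by rewrite !inE eqxx.
by apply: IH; move: Hn; rewrite (cardfsD1 a) aA.
Qed.

Lemma fpow_notin {a : K} {A M} : a \notin A -> M \in fpowerset A -> a \notin M.
Proof. by move=> aA; rewrite fpowersetE => sub; apply: contra aA; apply: (fsubsetP sub). Qed.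

Lemma DU1 (a : K) A Y : a \notin Y -> (a |` A) `\` Y = a |` (A `\` Y).
Proof.
move=> aY; apply/fsetP => x; rewrite !inE.
by case: (eqVneq x a) => [->|] //=; rewrite (negbTE aY).
Qed.

Lemma DUU (a : K) A Y : a \notin A -> (a |` A) `\` (a |` Y) = A `\` Y.
Proof.
move=> aA; apply/fsetP => x; rewrite !inE.
by case: (eqVneq x a) => [->|] //=; rewrite (negbTE aA) andbF.
Qed.

Lemma UD {Y Y' A : {fset K}} : Y' \in fpowerset (A `\` Y) -> (Y `|` Y') `\` Y = Y'.
Proof.
rewrite fpowersetE => sub; apply/fsetP => x; rewrite !inE.
have H : x \in Y' -> x \notin Y.
  by move=> xY'; have := fsubsetP sub x xY'; rewrite !inE => /andP[].
by case: (boolP (x \in Y')) => [/H|]; case: (x \in Y).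
Qed.

Variable V : comPzRingType.

Lemma alt_sum (N : {fset K}) :
  \sum_(Y <- fpowerset N) (-1) ^+ #|`Y| = (N == fset0)%:R :> V.
Proof.
elim/fset_ind': N => [|a A aA IH].
  by rewrite fpowerset0 big_seq_fset1 eqxx.
rewrite big_fpowU1 //= big_seq [X in (_ + X)%R]big_seq.
have -> : (a |` A == fset0) = false.
  by apply/negbTE/eqP => /fsetP /(_ a); rewrite !inE eqxx.
rewrite -big_split /=; apply: big1 => S HS.
by rewrite cardfsU1 (fpow_notin aA HS) exprS mulN1r addrN.
Qed.

Lemma alt_sum' (N : {fset K}) :
  \sum_(Y <- fpowerset N) (-1) ^+ #|`N `\` Y| = (N == fset0)%:R :> V.
Proof.
elim/fset_ind': N => [|a A aA IH].
  by rewrite fpowerset0 big_seq_fset1 eqxx fsetD0 cardfs0.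
rewrite big_fpowU1 //= big_seq [X in (_ + X)%R]big_seq.
have -> : (a |` A == fset0) = false.
  by apply/negbTE/eqP => /fsetP /(_ a); rewrite !inE eqxx.
rewrite -big_split /=; apply: big1 => S HS.
rewrite DU1 ?(fpow_notin aA HS) // DUU //.
have h : a \notin A `\` S by rewrite !inE (negbTE aA) andbF.
by rewrite cardfsU1 h /= exprS mulN1r addNr.
Qed.

Lemma exch (A : {fset K}) (F : {fset K} -> {fset K} -> V) :
  \sum_(N <- fpowerset A) \sum_(M <- fpowerset N) F M N =
  \sum_(M <- fpowerset A) \sum_(Y <- fpowerset (A `\` M)) F M (M `|` Y).
Proof.
elim/fset_ind': A F => [|a A aA IH] F.
  by rewrite fpowerset0 !big_seq_fset1 fpowerset0 fsetD0 fpowerset0 !big_seq_fset1 fsetU0.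
rewrite big_fpowU1 // big_fpowU1 //=.
rewrite [X in (_ + X)%R]big_seq.
under [X in (_ + X)%R]eq_bigr => N HN do rewrite big_fpowU1 ?(fpow_notin aA HN) //=.
rewrite -big_seq big_split /= IH IH IH.
rewrite [X in _ = (X + _)%R]big_seq [X in _ = (_ + X)%R]big_seq.
under eq_bigr => M HM do rewrite DU1 ?(fpow_notin aA HM) // big_fpowU1 ?inE ?(fpow_notin aA HM) //=.
under [X in _ = (_ + X)%R]eq_bigr => M HM do rewrite DUU //.
rewrite big_split /= -!big_seq addrA; congr (_ + _ + _)%R.
  by apply: eq_bigr => M _; apply: eq_bigr => Y _; rewrite fsetUCA.
by apply: eq_bigr => M _; apply: eq_bigr => Y _; rewrite fsetUA.
Qed.

Lemma indic_sum (A : {fset K}) (g : {fset K} -> V) :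
  \sum_(N <- fpowerset A) (N == fset0)%:R * g N = g fset0.
Proof.
rewrite (big_fsetD1 fset0) /=; last by rewrite fpowersetE fsub0set.
rewrite mul1r big1_fset ?addr0 //.
by move=> N; rewrite !inE => /andP[/negbTE -> _] _; rewrite mul0r.
Qed.

Lemma MI (A : {fset K}) (g : {fset K} -> V) :
  \sum_(Y <- fpowerset A) (-1) ^+ #|`Y| * \sum_(M <- fpowerset (A `\` Y)) g (Y `|` M)
  = g fset0.
Proof.
under eq_bigr => Y _ do rewrite big_distrr /=.
rewrite -(exch A (fun M N => (-1) ^+ #|`M| * g N)).
under eq_bigr => N _ do rewrite -big_distrl /= alt_sum.
exact: indic_sum.
Qed.

Definition phi (L : {fset K}) (rho : {fset K} -> V) (U : {fset K}) : V :=
  \sum_(Y <- fpowerset (L `\` U)) (-1) ^+ #|`Y| * rho (U `|` Y).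

Lemma rho_phi L rho X :
  rho X = \sum_(Y <- fpowerset (L `\` X)) phi L rho (X `|` Y).
Proof.
rewrite /phi.
under eq_bigr => Y _ do rewrite -fsetDDl big_seq.
under eq_bigr => Y _ do under eq_bigr => Y' HY' do rewrite -{1}(UD HY') -(fsetUA X Y Y').
under eq_bigr => Y _ do rewrite -big_seq.
rewrite -(exch _ (fun M N => (-1) ^+ #|`N `\` M| * rho (X `|` N))).
under eq_bigr => N _ do rewrite -big_distrl /= alt_sum'.
by rewrite indic_sum fsetU0.
Qed.
End Aux.

Section Main.
Variables (R : realType) (X : countType) (z : X -> complex R) (W : {fset X} -> complex R).

Lemma kappa1E s T : kappa1 W s T = Wcond W [fset s] T.
Proof.
rewrite /kappa1 /kappa fpowerset1 big_mkcond /=.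
have n0 : fset0 \notin [fset [fset s]].
  rewrite !inE; apply/eqP => /fsetP /(_ s); by rewrite !inE eqxx.
rewrite big_fsetU1 //= big_seq_fset1 ?eqxx mul1r.
have -> : ([fset s] != fset0) by apply/eqP => /fsetP /(_ s); rewrite !inE eqxx.
by [].
Qed.

Lemma kappa1_in s U : s \in U -> kappa1 W s U = 0.
Proof.
move=> sU; rewrite kappa1E /Wcond.
have -> : ([fset s] `&` U == fset0) = false.
  by apply/negbTE/eqP => /fsetP /(_ s); rewrite !inE eqxx sU.
have -> // : [exists y : [fset s], ([fset s] == [fset val y]) && (val y \in U)].
by apply/existsP; exists [` fset11 s]; rewrite /= eqxx sU.
Qed.

Lemma kappa1_notin s T : s \notin T ->
  kappa1 W s T = \prod_(D <- fpowerset T) W (s |` D).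
Proof.
move=> sT; rewrite kappa1E /Wcond.
have -> // : [fset s] `&` T == fset0.
apply/eqP/fsetP => x; rewrite !inE; case: eqP => [->|] //=.
by rewrite (negbTE sT).
Qed.

Lemma kappaU1 s T : s \notin T ->
  kappa W (s |` T) fset0 = kappa1 W s T * kappa W T fset0.
Proof.
move=> sT; rewrite kappa1_notin // /kappa big_mkcond big_fpowU1 //= -big_mkcond mulrC.
congr (_ * _); apply: eq_bigr => S _.
have -> : (s |` S != fset0) by apply/eqP => /fsetP /(_ s); rewrite !inE eqxx.
by rewrite /Wcond fsetI0 eqxx fpowerset0 big_seq_fset1 fsetU0.
Qed.

Lemma kappa0 : kappa W fset0 fset0 = 1.
Proof. by rewrite /kappa fpowerset0 big_mkcond big_seq_fset1 eqxx. Qed.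

Lemma zpowU1 s T : s \notin T -> zpow z (s |` T) = z s * zpow z T.
Proof. by move=> sT; rewrite /zpow big_fsetU1. Qed.

Lemma zpow0 : zpow z fset0 = 1.
Proof. by rewrite /zpow big_seq_fset0. Qed.
End Main.

Arguments phi {K V}.
Arguments exch {K V}.
Arguments rho_phi {K V}.
Arguments MI {K V}.
Arguments UD {K Y Y' A}.
Arguments fpow_notin {K a A M}.

Section Main2.
Variables (R : realType) (X : countType) (z : X -> complex R) (W : {fset X} -> complex R)
  (L : {fset X}) (rho : {fset X} -> complex R).
Hypothesis hyp : forall (s : X) (T : {fset X}), s \notin T ->
     rho (s |` T) =
       \sum_(N <- fpowerset (L `\` T)) z s * gamma W s N T * rho (T `|` N).

Lemma stepA s T : s \notin T ->
  rho (s |` T) = \sum_(M <- fpowerset (L `\` T))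
      z s * kappa1 W s (T `|` M) * phi L rho (T `|` M).
Proof.
move=> sT; rewrite hyp //.
under eq_bigr => N _ do rewrite /gamma big_distrr big_distrl /=.
rewrite (exch _ (fun M N => z s * ((-1) ^+ #|`N `\` M| * kappa1 W s (T `|` M)) * rho (T `|` N))).
rewrite big_seq [RHS]big_seq; apply: eq_bigr => M HM.
rewrite /phi -fsetDDl big_distrr big_seq [RHS]big_seq /=; apply: eq_bigr => Y HY.
rewrite (UD HY) fsetUA -!mulrA; congr (_ * _); exact: mulrCA.
Qed.

Lemma stepB s T : s \notin T ->
  phi L rho (s |` T) = z s * kappa1 W s T * phi L rho T.
Proof.
move=> sT.
pose g U := z s * kappa1 W s (T `|` U) * phi L rho (T `|` U).
have sA : s \notin L `\` (s |` T) by rewrite !inE eqxx.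
have E : forall Y, Y \in fpowerset (L `\` (s |` T)) ->
  \sum_(M <- fpowerset (L `\` (T `|` Y))) z s * kappa1 W s (T `|` Y `|` M) * phi L rho (T `|` Y `|` M)
  = \sum_(M <- fpowerset ((L `\` (s |` T)) `\` Y)) g (Y `|` M).
  move=> Y HY; have sY := fpow_notin sA HY.
  under [RHS]eq_bigr => M _ do rewrite /g fsetUA.
  symmetry; apply: big_fset_incl.
    rewrite fpowersetS; apply/fsubsetP => x; rewrite !inE.
    by move: (x == s) (x \in T) (x \in Y) (x \in L) => [] [] [] [].
  move=> M HM HM'.
  have sM : s \in M.
    apply: contraNT HM' => sM; rewrite fpowersetE; apply/fsubsetP => x xM.
    move: HM; rewrite fpowersetE => /fsubsetP /(_ x xM); rewrite !inE.
    have xs : (x == s) = false by apply/negbTE; apply: contraNneq sM => <-.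
    by rewrite xs /=; case: (x \in T); case: (x \in Y).
  by rewrite kappa1_in ?mulr0 ?mul0r // !inE sM !orbT.
rewrite {1}/phi big_seq.
under eq_bigr => Y HY.
  rewrite -fsetUA stepA; last first.
    by rewrite !inE negb_or sT (fpow_notin sA HY).
  rewrite E //.
  over.
rewrite -big_seq (MI _ g) /g !fsetU0 //.
Qed.

Lemma stepC U : phi L rho U = zpow z U * kappa W U fset0 * phi L rho fset0.
Proof.
elim/fset_ind': U => [|a A aA IH]; first by rewrite zpow0 kappa0 !mul1r.
rewrite stepB // IH zpowU1 // kappaU1 // !mulrA; congr (_ * _).
by rewrite -!mulrA; congr (_ * _); rewrite mulrCA.
Qed.

Lemma stepD A : rho A = Zpart z W A L * phi L rho fset0.
Proof.
rewrite (rho_phi L rho A) /Zpart big_distrl /=; apply: eq_bigr => Y _.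
by rewrite stepC.
Qed.
End Main2.

Theorem proposition6p1 (R : realType) (X : countType)
  (z : X -> complex R) (W : {fset X} -> complex R)
  (L : {fset X}) (rho : {fset X} -> complex R) :
  (forall (s : X) (T : {fset X}), s \notin T ->
     rho (s |` T) =
       \sum_(N <- fpowerset (L `\` T)) z s * gamma W s N T * rho (T `|` N)) ->
  (exists c : complex R, forall A : {fset X}, rho A = Zpart z W A L * c) /\
  (rho fset0 != 0 ->
     Z0 z W L != 0 /\
     forall A : {fset X}, corr z W A L = rho A / rho fset0).
Proof.
move=> hyp; have D := @stepD R X z W L rho hyp.
split; first by exists (phi L rho fset0).
move=> r0.
have Z0n : Z0 z W L != 0.
  by apply: contra r0; rewrite /Z0 D => /eqP ->; rewrite mul0r.
have cn : phi L rho fset0 != 0.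
  by apply: contra r0; rewrite D => /eqP ->; rewrite mulr0.
split => // A; rewrite /corr (D A) (D fset0) -/(Z0 z W L).
by rewrite -mulf_div divff // mulr1.
Qed.
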